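(* For every group $G$, let $\epsilon\colon\mathrm{Gr}(\mathrm{Pq}(G))\to G$ be the surjective group homomorphism with $\epsilon(\sigma(a))=a$ for all $a\in G$. Then the kernel of $\epsilon$ is contained in the center of $\mathrm{Gr}(\mathrm{Pq}(G))$; in particular $\mathrm{Gr}(\mathrm{Pq}(G))$ is a central extension of $G$ with abelian kernel.
   Context: For a group $G$, $\mathrm{Pq}(G)$ is the power quandle on the underlying set of $G$ with $a\rhd b=aba^{-1}$, $\pi^n(a)=a^n$ ($n\in\mathbb{Z}$), and unit the identity $e$. For a power quandle $P$ (a set with operation $\rhd$, maps $\pi^n$, unit $e$), $\mathrm{Gr}(P)$ is the group with generators $\sigma(a)$, $a\in P$, and relations $\sigma(a\rhd b)=\sigma(a)\sigma(b)\sigma(a)^{-1}$, $\sigma(\pi^n(a))=\sigma(a)^n$, $\sigma(e)=1$ for all $a,b\in P$, $n\in\mathbb{Z}$. Thus $\mathrm{Gr}(\mathrm{Pq}(G))$ has generators $\sigma(a)$, $a\in G$, with relations $\sigma(aba^{-1})=\sigma(a)\sigma(b)\sigma(a)^{-1}$, $\sigma(a^n)=\sigma(a)^n$, $\sigma(e)=1$. *)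

(* Defs.v *)
(* Abstract (possibly infinite) groups and the group Gr(Pq(G))
   given by generators and relations, realised as words modulo the congruence
   generated by the defining relations (a setoid presentation). *)
From Stdlib Require Import ZArith List.
Import ListNotations.
Set Implicit Arguments.

Record Group := {
  gcar :> Type;
  gmul : gcar -> gcar -> gcar;
  ginv : gcar -> gcar;
  gone : gcar;
  gmulA : forall x y z, gmul x (gmul y z) = gmul (gmul x y) z;
  gmul1l : forall x, gmul gone x = x;
  gmul1r : forall x, gmul x gone = x;
  gmulVl : forall x, gmul (ginv x) x = gone;
  gmulVr : forall x, gmul x (ginv x) = gone
}.

Arguments gmul {g}.
Arguments ginv {g}.
Arguments gone {g}.

(* integer powers a^n in G, i.e. pi^n(a) in Pq(G) *)
Definition gnpow {G : Group} (a : G) (n : nat) : G := Nat.iter n (gmul a) gone.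
Definition gpow {G : Group} (a : G) (z : Z) : G :=
  match z with
  | Z0 => gone
  | Zpos p => gnpow a (Pos.to_nat p)
  | Zneg p => ginv (gnpow a (Pos.to_nat p))
  end.

(* Words in the generators sigma(a), a in G: (true, a) stands for sigma(a),
   (false, a) for sigma(a)^{-1}.  Concatenation is the product. *)
Definition word (G : Group) := list (bool * G).

Definition sigma_pow {G : Group} (a : G) (z : Z) : word G :=
  match z with
  | Z0 => []
  | Zpos p => repeat (true, a) (Pos.to_nat p)
  | Zneg p => repeat (false, a) (Pos.to_nat p)
  end.

Inductive gr_eq (G : Group) : word G -> word G -> Prop :=
  | gr_refl u : gr_eq u u
  | gr_sym u v : gr_eq u v -> gr_eq v u
  | gr_trans u v w : gr_eq u v -> gr_eq v w -> gr_eq u w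
  | gr_app u u' v v' : gr_eq u u' -> gr_eq v v' -> gr_eq (u ++ v) (u' ++ v')
  | gr_cancel (b : bool) (a : G) : gr_eq [(b, a); (negb b, a)] []
  | gr_conj (a b : G) :
      gr_eq [(true, gmul (gmul a b) (ginv a))] [(true, a); (true, b); (false, a)]
  | gr_pow (a : G) (n : Z) : gr_eq [(true, gpow a n)] (sigma_pow a n)
  | gr_unit : gr_eq [(true, @gone G)] [].

Definition epsilon {G : Group} (w : word G) : G :=
  fold_right (fun (l : bool * G) (acc : G) => gmul (if fst l then snd l else ginv (snd l)) acc) gone w.

Definition gr_central {G : Group} (w : word G) : Prop :=
  forall v : word G, gr_eq (w ++ v) (v ++ w).

(* Main.v *)
Require Import Defs.
From Stdlib Require Import ZArith List.
Import ListNotations.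

Section S.
Variable G : Group.

Lemma inv_uniq (x y : G) : gmul x y = gone -> y = ginv x.
Proof.
  intro H. rewrite <- (gmul1l G y), <- (gmulVl G x), <- gmulA, H, gmul1r. reflexivity.
Qed.

Lemma inv_mul (x y : G) : ginv (gmul x y) = gmul (ginv y) (ginv x).
Proof.
  symmetry. apply inv_uniq.
  rewrite gmulA, <- (gmulA G x y), gmulVr, gmul1r, gmulVr. reflexivity.
Qed.

Lemma inv_one : ginv (@gone G) = gone.
Proof. symmetry. apply inv_uniq. apply gmul1l. Qed.

Lemma inv_inv (x : G) : ginv (ginv x) = x.
Proof. symmetry. apply inv_uniq. apply gmulVl. Qed.

Lemma gnpow_Sr (a : G) k : gnpow a (S k) = gmul (gnpow a k) a.
Proof.
  unfold gnpow. induction k; simpl.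
  - rewrite gmul1r, gmul1l. reflexivity.
  - simpl in IHk. rewrite IHk, gmulA, IHk. reflexivity.
Qed.

Lemma eps_app (u v : word G) : epsilon (u ++ v) = gmul (epsilon u) (epsilon v).
Proof.
  induction u as [|l u IH]; simpl.
  - rewrite gmul1l. reflexivity.
  - rewrite IH, gmulA. reflexivity.
Qed.

Lemma eps_rep_true (a : G) k : epsilon (repeat (true, a) k) = gnpow a k.
Proof. induction k; simpl; [reflexivity| rewrite IHk; reflexivity]. Qed.

Lemma eps_rep_false (a : G) k : epsilon (repeat (false, a) k) = ginv (gnpow a k).
Proof.
  induction k; simpl.
  - rewrite inv_one. reflexivity.
  - rewrite IHk. rewrite <- inv_mul. rewrite <- gnpow_Sr. reflexivity.
Qed.

Lemma eps_wd (u v : word G) : gr_eq u v -> epsilon u = epsilon v.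
Proof.
  induction 1; try congruence.
  - rewrite !eps_app. congruence.
  - destruct b; simpl; rewrite gmul1r; [apply gmulVr | apply gmulVl].
  - simpl. rewrite !gmul1r, !gmulA. reflexivity.
  - destruct n; simpl; rewrite gmul1r.
    + reflexivity.
    + rewrite eps_rep_true. reflexivity.
    + rewrite eps_rep_false. reflexivity.
  - simpl. apply gmul1r.
Qed.

Definition lval (l : bool * G) : G := if fst l then snd l else ginv (snd l).

Lemma gr_cons (l : bool * G) u v : gr_eq u v -> gr_eq (l :: u) (l :: v).
Proof. intro H. apply (@gr_app _ [l] [l] u v); [constructor | exact H]. Qed.

Lemma gr_eq_sing (c d : G) : c = d -> gr_eq [(true, c)] [(true, d)].
Proof. intros ->. constructor. Qed.

Lemma letter_conj (l : bool * G) (c : G) :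
  gr_eq [l; (true, c)] [(true, gmul (gmul (lval l) c) (ginv (lval l))); l].
Proof.
  destruct l as [[|] a]; simpl.
  -
    apply gr_sym.
    apply gr_trans with ([(true,a); (true,c); (false,a)] ++ [(true,a)]).
    + apply (@gr_app _ [_] _ [(true,a)] [(true,a)]); [apply gr_conj | constructor].
    + simpl. apply gr_cons. apply gr_cons.
      apply (@gr_cancel _ false a).
  - set (d := gmul (gmul (ginv a) c) (ginv (ginv a))).
    apply gr_trans with ([(false,a)] ++ [(true,a); (true,d); (false,a)]).
    + apply (@gr_app _ [(false,a)] [(false,a)] [(true,c)]); [constructor|].
      apply gr_trans with [(true, gmul (gmul a d) (ginv a))].
      * apply gr_eq_sing. unfold d. rewrite inv_inv.
        rewrite !gmulA, gmulVr, gmul1l, <- !gmulA, gmulVr, gmul1r. reflexivity.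
      * apply gr_conj.
    + simpl. apply (@gr_app _ [(false,a);(true,a)] [] [(true,d);(false,a)]).
      * apply (@gr_cancel _ false a).
      * constructor.
Qed.

Lemma conj_word (w : word G) (b : G) :
  gr_eq (w ++ [(true, b)])
        ((true, gmul (gmul (epsilon w) b) (ginv (epsilon w))) :: w).
Proof.
  induction w as [|l w IH]; simpl.
  - apply gr_eq_sing. rewrite inv_one, gmul1l, gmul1r. reflexivity.
  - apply gr_trans with (l :: (true, gmul (gmul (epsilon w) b) (ginv (epsilon w))) :: w).
    + apply gr_cons. exact IH.
    + apply gr_trans with ([(true, gmul (gmul (lval l) (gmul (gmul (epsilon w) b) (ginv (epsilon w)))) (ginv (lval l))); l] ++ w).
      * apply (@gr_app _ [l; _] _ w w); [apply letter_conj | constructor].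
      * simpl. apply (@gr_app _ [_] [_] (l :: w) (l :: w)); [|constructor].
        apply gr_eq_sing. unfold lval. rewrite inv_mul, !gmulA. reflexivity.
Qed.

Lemma comm_letter (w : word G) (l : bool * G) :
  epsilon w = gone -> gr_eq (w ++ [l]) (l :: w).
Proof.
  intro Hw.
  assert (Ht : forall b, gr_eq (w ++ [(true, b)]) ((true, b) :: w)).
  { intro b. eapply gr_trans; [apply conj_word|].
    rewrite Hw, inv_one, gmul1l, gmul1r. constructor. }
  destruct l as [[|] b]; [apply Ht|].
  assert (H1 : gr_eq ([(false,b)] ++ (w ++ [(true,b)]) ++ [(false,b)])
                     ([(false,b)] ++ ((true,b) :: w) ++ [(false,b)])).
  { apply gr_app; [constructor|]. apply gr_app; [apply Ht|constructor]. }
  apply gr_sym.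
  apply gr_trans with ([(false,b)] ++ (w ++ [(true,b)]) ++ [(false,b)]).
  - simpl. apply gr_cons. rewrite <- app_assoc. simpl.
    apply gr_sym. replace w with (w ++ []) at 2 by apply app_nil_r.
    apply (@gr_app _ w w [(true,b);(false,b)] []); [constructor| apply (@gr_cancel _ true b)].
  - eapply gr_trans; [exact H1|]. simpl.
    apply (@gr_app _ [(false,b);(true,b)] [] (w ++ [(false,b)])); [apply (@gr_cancel _ false b)|constructor].
Qed.

End S.

Theorem mainTheorem8 :
  forall (G : Group),
    (* epsilon is well defined on Gr(Pq(G)) (it is a homomorphism on words) *)
    (forall u v : word G, gr_eq u v -> epsilon u = epsilon v) /\
    (* ker epsilon is contained in the center of Gr(Pq(G)) *)
    (forall w : word G, epsilon w = gone -> gr_central w).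
Proof.
  intro G. split; [apply eps_wd|].
  intros w Hw v. induction v as [|l v IH].
  - rewrite app_nil_r. constructor.
  - replace (w ++ l :: v) with ((w ++ [l]) ++ v) by (rewrite <- app_assoc; reflexivity).
    apply gr_trans with ((l :: w) ++ v).
    + apply gr_app; [apply comm_letter; exact Hw | constructor].
    + simpl. apply gr_cons. exact IH.
Qed.
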